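(* Let $e:\mathbb{R}^n\to\mathbb{R}^n$ and $f:\mathbb{R}^n\times\mathbb{R}^m\to\mathbb{R}^n$ be continuously differentiable, consider the implicit model $e(x_{t+1})=f(x_t,u_t)$, and let $\alpha\in(0,1)$. Suppose there exists $\epsilon>0$ with $E(x)+E(x)^\top\succ\epsilon I$ for all $x$, and that for all $(x,u)$: $$F(x,u)\ge 0,\quad K(x,u)\ge 0,\quad E(x)\in\mathbb{M}^n,\quad \mathbf{1}^\top\big(\alpha E(x)-F(x,u)\big)\ge 0 .$$ Then the model is well-posed, monotone, and contracting with rate $\alpha$. If in addition $e(0)=f(0,0)$, the model is also positive.
   Context: Consider discrete-time implicit models $e(x_{t+1})=f(x_t,u_t)$, $t=0,1,2,\dots$, with state $x_t\in\mathbb{R}^n$ and input $u_t\in\mathbb{R}^m$, where $e$ and $f$ are continuously differentiable. Write $E=\partial e/\partial x$, $F=\partial f/\partial x$, $K=\partial f/\partial u$. The model is well-posed if for every $(x_t,u_t)$ there is a unique $x_{t+1}$ satisfying the model equation. A well-posed system is contracting with rate $\alpha\in(0,1)$ if there is $p\in[1,\infty]$ such that for any two initial conditions $x^a_0,x^b_0$ and any common input sequence there exists a continuous function $b_p(x^a_0,x^b_0)>0$ with $|x^a_t-x^b_t|_p<\alpha^t b_p(x^a_0,x^b_0)$ for all $t$. It is monotone if $x^a_0\ge x^b_0$ and $u^a_t\ge u^b_t$ for all $t$ imply $x^a_t\ge x^b_t$ for all $t$. It is positive if $x_0\ge0$ and $u_t\ge 0$ for all $t$ imply $x_t\ge0$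 for all $t$. Inequalities between vectors/matrices are elementwise; $\mathbf{1}$ is the all-ones column vector; $M\succ0$ means positive definite. $\mathbb{M}^n$ is the set of $n\times n$ nonsingular M-matrices: real matrices with all off-diagonal entries $\le0$ and all eigenvalues having positive real part. *)

(* Defs.v *)
From HB Require Import structures.
From mathcomp Require Import all_boot all_order all_algebra.
From mathcomp Require Import all_classical all_reals all_analysis.
From mathcomp Require Import complex.
Set Implicit Arguments. Unset Strict Implicit. Unset Printing Implicit Defensive.
Import Order.TTheory GRing.Theory Num.Theory.
Import numFieldNormedType.Exports.
Local Open Scope ring_scope.

Section Defs.
Variable R : realType.

(* Standard (column-convention) Jacobian: Jac g x i j = d g_i / d x_j.
   MathComp-Analysis' [jacobian] uses the row-vector convention
   (jacobian g x i j = d g_j / d x_i), hence the transpose. *)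
Definition Jac n k (g : 'rV[R]_n -> 'rV[R]_k) (x : 'rV[R]_n) : 'M[R]_(k, n) :=
  (jacobian g x)^T.

Definition C1map n k (g : 'rV[R]_n -> 'rV[R]_k) : Prop :=
  (forall x, differentiable g x) /\ continuous (fun x => jacobian g x).

(* f : R^n x R^m -> R^n is given curried; joint C^1 regularity is required
   of the uncurried map on R^(n+m). *)
Definition uncurry_f n m (f : 'rV[R]_n -> 'rV[R]_m -> 'rV[R]_n)
  : 'rV[R]_(n + m) -> 'rV[R]_n := fun z => f (lsubmx z) (rsubmx z).

Definition Emat n (e : 'rV[R]_n -> 'rV[R]_n) x : 'M[R]_n := Jac e x.
Definition Fmat n m (f : 'rV[R]_n -> 'rV[R]_m -> 'rV[R]_n) x u : 'M[R]_n :=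
  Jac (fun y => f y u) x.
Definition Kmat n m (f : 'rV[R]_n -> 'rV[R]_m -> 'rV[R]_n) x u : 'M[R]_(n, m) :=
  Jac (fun v => f x v) u.

Definition mx_le p q (A B : 'M[R]_(p, q)) : Prop := forall i j, A i j <= B i j.

(* M positive definite (symmetric part is not assumed; quadratic form) *)
Definition posdef_mx n (M : 'M[R]_n) : Prop :=
  forall v : 'rV[R]_n, v != 0 -> 0 < (v *m M *m v^T) 0 0.

Definition is_Mmatrix n (A : 'M[R]_n) : Prop :=
  (forall i j, i != j -> A i j <= 0) /\
  (forall lam : complex R,
     eigenvalue (map_mx (fun a : R => complex.Complex a 0) A) lam ->
     0 < complex.Re lam).

Definition lp_norm n (p : \bar R) (v : 'rV[R]_n) : R :=
  match p with
  | EFin r => (\sum_(i < n) `|v 0 i| `^ r) `^ r^-1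
  | _ => \big[Num.max/0]_(i < n) `|v 0 i|
  end.

Definition is_traj n m (e : 'rV[R]_n -> 'rV[R]_n)
  (f : 'rV[R]_n -> 'rV[R]_m -> 'rV[R]_n)
  (u : nat -> 'rV[R]_m) (x : nat -> 'rV[R]_n) : Prop :=
  forall t, e (x t.+1) = f (x t) (u t).

Definition well_posed_sys n m (e : 'rV[R]_n -> 'rV[R]_n)
  (f : 'rV[R]_n -> 'rV[R]_m -> 'rV[R]_n) : Prop :=
  forall x u, exists! y, e y = f x u.

Definition contracting_sys n m (e : 'rV[R]_n -> 'rV[R]_n)
  (f : 'rV[R]_n -> 'rV[R]_m -> 'rV[R]_n) (alpha : R) : Prop :=
  well_posed_sys e f /\
  exists p : \bar R, (1%:E <= p)%E /\
  exists b : 'rV[R]_n -> 'rV[R]_n -> R,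
    continuous (fun z : 'rV[R]_n * 'rV[R]_n => b z.1 z.2) /\
    (forall xa xb, 0 < b xa xb) /\
    forall (u : nat -> 'rV[R]_m) (xa xb : nat -> 'rV[R]_n),
      is_traj e f u xa -> is_traj e f u xb ->
      forall t, lp_norm p (xa t - xb t) < alpha ^+ t * b (xa 0%N) (xb 0%N).

Definition monotone_sys n m (e : 'rV[R]_n -> 'rV[R]_n)
  (f : 'rV[R]_n -> 'rV[R]_m -> 'rV[R]_n) : Prop :=
  forall (ua ub : nat -> 'rV[R]_m) (xa xb : nat -> 'rV[R]_n),
    is_traj e f ua xa -> is_traj e f ub xb ->
    mx_le (xb 0%N) (xa 0%N) -> (forall t, mx_le (ub t) (ua t)) ->
    forall t, mx_le (xb t) (xa t).

Definition positive_sys n m (e : 'rV[R]_n -> 'rV[R]_n)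
  (f : 'rV[R]_n -> 'rV[R]_m -> 'rV[R]_n) : Prop :=
  forall (u : nat -> 'rV[R]_m) (x : nat -> 'rV[R]_n),
    is_traj e f u x -> mx_le 0 (x 0%N) -> (forall t, mx_le 0 (u t)) ->
    forall t, mx_le 0 (x t).

End Defs.

(* Main.v *)
Require Import Defs.
From HB Require Import structures.
From mathcomp Require Import all_boot all_order all_algebra.
From mathcomp Require Import all_classical all_reals all_analysis.
From mathcomp Require Import complex.
From mathcomp Require Import lra ring.
Import Order.TTheory GRing.Theory Num.Theory.
Import numFieldNormedType.Exports.
Local Open Scope ring_scope.
Set Implicit Arguments. Unset Strict Implicit.

Section H.
Variable R : realType.

Lemma is_derive_ext (V W : normedModType R) (f g : V -> W) (x v : V) (df dg : W) :
  is_derive x v f df -> f = g -> df = dg -> is_derive x v g dg.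
Proof. by move=> h <- <-. Qed.

Lemma is_derive_line n k (g : 'rV[R]_n -> 'rV[R]_k) b d s :
  differentiable g (b + s *: d) ->
  is_derive s (1:R) (fun t : R => g (b + t *: d)) (d *m jacobian g (b + s *: d)).
Proof.
move=> dg.
have E : (fun h : R => h^-1 *: ((fun t : R => g (b + t *: d)) (h *: (1:R) + s) - g (b + s *: d)))
   = (fun h : R => h^-1 *: (g (h *: d + (b + s *: d)) - g (b + s *: d))).
  apply/funext => h /=; congr (_ *: (g _ - _)).
  by rewrite [h *: 1]mulr1 scalerDl addrCA.
have dv : derivable g (b + s *: d) d by exact: diff_derivable.
apply: DeriveDef.
  by rewrite /derivable E.
by rewrite /derive E -deriveEjacobian.
Qed.

Lemma is_derive_coord k (G : R -> 'rV[R]_k) t G' i :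
  is_derive t (1:R) G G' -> is_derive t (1:R) (fun t => G t 0 i) (G' 0 i).
Proof.
move=> [dG DG]; have := (derivable_mxP G t 1).1 dG 0 i => dc.
apply: DeriveDef => //.
by rewrite -DG derive_mx // mxE.
Qed.

Lemma is_derive_phi k (G : R -> 'rV[R]_k) t G' (c : 'rV[R]_k) :
  is_derive t (1:R) G G' ->
  is_derive t (1:R) (fun t => \sum_i c 0 i * G t 0 i) (\sum_i c 0 i * G' 0 i).
Proof.
move=> dG.
have h : forall i, is_derive t (1:R) (c 0 i \*: (fun t => G t 0 i)) (c 0 i *: G' 0 i).
  move=> i; apply: is_deriveZ; exact: is_derive_coord.
have H0 := is_derive_sum h.
eapply is_derive_ext; first exact: H0.
  by apply/funext => x; rewrite fct_sumE.
by [].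
Qed.

Lemma deriv_mono (f df : R -> R) :
  (forall x, is_derive x (1:R) f (df x)) ->
  (forall x, 0 < x < 1 -> 0 <= df x) -> f 0 <= f 1.
Proof.
move=> D P.
have dv x : derivable f x 1 by have [] := D x.
apply: (@ger0_derive1_ndecr R f 0 1) => //.
- move=> x; rewrite in_itv /= => /P; rewrite derive1E.
  by have [_ ->] := D x.
- apply: continuous_subspaceT => x.
  apply: differentiable_continuous; exact/derivable1_diffP.
Qed.


Lemma jac_entry n k (g : 'rV[R]_n -> 'rV[R]_k) (x d : 'rV[R]_n) i :
  (d *m jacobian g x) 0 i = \sum_j d 0 j * Jac g x i j.
Proof. rewrite mxE; apply: eq_bigr => j _ . unfold Jac; by rewrite !mxE. Qed.

Lemma seg_gen n k1 k2 (g1 : 'rV[R]_n -> 'rV[R]_k1) (g2 : 'rV[R]_n -> 'rV[R]_k2)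
  (c1 : 'rV[R]_k1) (c2 : 'rV[R]_k2) (K : R) (b d : 'rV[R]_n) :
  (forall x, differentiable g1 x) -> (forall x, differentiable g2 x) ->
  (forall s, 0 < s < 1 ->
     0 <= \sum_i c1 0 i * (\sum_j d 0 j * Jac g1 (b + s *: d) i j)
        + \sum_i c2 0 i * (\sum_j d 0 j * Jac g2 (b + s *: d) i j) + K) ->
  \sum_i c1 0 i * g1 b 0 i + \sum_i c2 0 i * g2 b 0 i <=
  \sum_i c1 0 i * g1 (b + d) 0 i + \sum_i c2 0 i * g2 (b + d) 0 i + K.
Proof.
move=> d1 d2 P.
pose F := fun s : R => \sum_i c1 0 i * g1 (b + s *: d) 0 i
   + \sum_i c2 0 i * g2 (b + s *: d) 0 i + s * K.
have DF : forall s, is_derive s (1:R) F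
   (\sum_i c1 0 i * (\sum_j d 0 j * Jac g1 (b + s *: d) i j)
        + \sum_i c2 0 i * (\sum_j d 0 j * Jac g2 (b + s *: d) i j) + K).
  move=> s.
  have h1 := @is_derive_phi _ _ _ _ c1 (@is_derive_line _ _ g1 b d s (d1 _)).
  have h2 := @is_derive_phi _ _ _ _ c2 (@is_derive_line _ _ g2 b d s (d2 _)).
  have h3 : is_derive s (1:R) (K \*: (@id R)) (K *: (1:R)).
    apply: is_deriveZ.
  have h := is_deriveD (is_deriveD h1 h2) h3.
  eapply is_derive_ext; first exact: h.
    by apply/funext => x /=; rewrite /F mulrC.
  rewrite /= [K *: 1]mulr1; congr (_ + _ + _); apply: eq_bigr => i _;
  by rewrite jac_entry.
have := @deriv_mono F _ DF P.
by rewrite /F !scale0r !addr0 !scale1r mul0r addr0 mul1r.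
Qed.

Lemma diff_affine n k (A : 'M[R]_(n, k)) (C : 'rV[R]_k) (x : 'rV[R]_n) :
  differentiable (fun y : 'rV[R]_n => y *m A + C) x.
Proof.
have -> : (fun y : 'rV[R]_n => y *m A + C) =
   (\sum_(j < n) (fun y : 'rV[R]_n => y 0 j *: row j A)) + cst C.
  apply/funext => y /=; rewrite fct_sumE mulmx_sum_row //.
apply: differentiableD; last exact: differentiable_cst.
apply: differentiable_sum => j.
apply: differentiableZl; exact: differentiable_coord.
Qed.

Lemma diff_f1 n m (f : 'rV[R]_n -> 'rV[R]_m -> 'rV[R]_n) :
  (forall z, differentiable (uncurry_f f) z) ->
  forall x u, differentiable (fun y => f y u) x.
Proof.
move=> H x u.
have -> : (fun y => f y u) = uncurry_f f \o (fun y : 'rV[R]_n => y *m row_mx 1%:M 0 + row_mx 0 u).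
  apply/funext => y; rewrite /uncurry_f /= mul_mx_row mulmx1 mulmx0 add_row_mx addr0 add0r.
  by rewrite row_mxKl row_mxKr.
apply: differentiable_comp; [exact: diff_affine | exact: H].
Qed.

Lemma diff_f2 n m (f : 'rV[R]_n -> 'rV[R]_m -> 'rV[R]_n) :
  (forall z, differentiable (uncurry_f f) z) ->
  forall x u, differentiable (fun v => f x v) u.
Proof.
move=> H x u.
have -> : (fun v => f x v) = uncurry_f f \o (fun v : 'rV[R]_m => v *m row_mx 0 1%:M + row_mx x 0).
  apply/funext => y; rewrite /uncurry_f /= mul_mx_row mulmx1 mulmx0 add_row_mx addr0 add0r.
  by rewrite row_mxKl row_mxKr.
apply: differentiable_comp; [exact: diff_affine | exact: H].
Qed.

End H.

Section A.
Variable R : realFieldType.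

Lemma absfam n (s x : 'I_n -> R) : (forall k, s k = 1 \/ s k = -1) ->
  (forall k, 0 <= s k * x k) -> \sum_k `|x k| = \sum_k s k * x k.
Proof.
move=> hs hx; apply: eq_bigr => k _.
have := hx k; case: (hs k) => ->; rewrite ?mul1r ?mulN1r => h.
  by rewrite ger0_norm.
by rewrite ler0_norm // -oppr_ge0.
Qed.

Lemma keyineq n (i : 'I_n) (s x : 'I_n -> R) : (forall k, s k = 1 \/ s k = -1) ->
  (forall k, k != i -> s k * x k <= 0) -> \sum_k s k * x k <= `|\sum_k x k|.
Proof.
move=> hs hx.
rewrite (bigD1 i) //= [X in _ <= `|X|](bigD1 i) //=.
have hY : `|\sum_(k | k != i) x k| <= - \sum_(k | k != i) s k * x k.
  rewrite -sumrN; apply: le_trans (ler_norm_sum _ _ _) _.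
  apply: ler_sum => k ki; have := hx k ki.
  case: (hs k) => ->; rewrite ?mul1r ?mulN1r => h.
    by rewrite ler0_norm.
  by rewrite opprK ger0_norm // -oppr_le0.
have hx1 : s i * x i <= `|x i|.
  by case: (hs i) => ->; rewrite ?mul1r ?mulN1r ?ler_norm // -normrN ler_norm.
have ht : `|x i| <= `|x i + \sum_(k | k != i) x k| + `|\sum_(k | k != i) x k|.
  have := ler_normB (x i + \sum_(k | k != i) x k) (\sum_(k | k != i) x k).
  by rewrite addrK.
lra.
Qed.

Lemma chain n (alpha : R) (s : 'I_n -> R) (F E : 'I_n -> 'I_n -> R) :
  0 <= alpha ->
  (forall k, s k = 1 \/ s k = -1) ->
  (forall k i, 0 <= s k * F k i) ->
  (forall k i, i != k -> s k * E k i <= 0) ->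
  (forall k, \sum_i s k * F k i <= alpha * \sum_i s k * E k i) ->
  \sum_i `|\sum_k F k i| <= alpha * \sum_i `|\sum_k E k i|.
Proof.
move=> a0 hs hF hE hL.
apply: (@le_trans _ _ (\sum_i \sum_k `|F k i|)).
  by apply: ler_sum => i _; exact: ler_norm_sum.
have -> : \sum_i \sum_k `|F k i| = \sum_i \sum_k s k * F k i.
  by apply: eq_bigr => i _; apply: absfam.
rewrite exchange_big /=.
apply: (@le_trans _ _ (\sum_k alpha * \sum_i s k * E k i)); first exact: ler_sum.
rewrite -mulr_sumr exchange_big /=; apply: ler_wpM2l => //.
apply: ler_sum => i _; apply: (@keyineq n i s (fun k => E k i)) => // k ki.
  by apply: hE; rewrite eq_sym ki.
Qed.
End A.

Section C.
Variable R : realType.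

Lemma cont_sum (T : topologicalType) k (F : 'I_k -> T -> R) x :
  (forall i, {for x, continuous (F i)}) -> {for x, continuous (fun y => \sum_i F i y)}.
Proof.
move=> h; have -> : (fun y => \sum_i F i y) = \sum_i F i.
  by apply/funext => y; rewrite fct_sumE.
elim/big_ind: _ => //; first exact: cst_continuous.
by move=> f g; apply: continuousD.
Qed.

Lemma cont_coord (T : topologicalType) k (h : T -> 'rV[R]_k) i x :
  {for x, continuous h} -> {for x, continuous (fun y => h y 0 i)}.
Proof.
move=> hc; apply: (@continuous_comp _ _ _ h (fun M : 'rV[R]_k => M 0 i)) => //.
exact: coord_continuous.
Qed.

Lemma cont_sq (T : topologicalType) (h : T -> R) (a : R) x :
  {for x, continuous h} -> {for x, continuous (fun y => (h y - a) ^+ 2)}.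
Proof.
move=> hc.
have -> : (fun y => (h y - a) ^+ 2) = (h - cst a) \* (h - cst a).
  by apply/funext => y; rewrite /= expr2.
apply: continuousM; apply: continuousB => //; exact: cst_continuous.
Qed.

Lemma cont_abs (T : topologicalType) (h : T -> R) x :
  {for x, continuous h} -> {for x, continuous (fun y => `|h y|)}.
Proof.
move=> hc; apply: (@continuous_comp _ _ _ h (fun r : R => `|r|)) => //.
exact: norm_continuous.
Qed.

Lemma is_derive_sq (h : R -> R) (t h' a : R) :
  is_derive t (1:R) h h' -> is_derive t (1:R) (fun s => (h s - a) ^+ 2) (2 * (h t - a) * h').
Proof.
move=> dh.
have hb : is_derive t (1:R) (h - cst a) (h' - 0).
  by apply: is_deriveB.
have hm := is_deriveM hb hb.
have E1 : (h - cst a) * (h - cst a) = (fun s => (h s - a) ^+ 2).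
  by apply/funext => s; rewrite /= expr2.
rewrite -E1.
apply: (is_derive_eq hm).
rewrite /= subr0; change ((h t - a) * h' + (h t - a) * h' = 2 * (h t - a) * h'); ring.
Qed.

End C.

Section Main.
Variables (R : realType) (n m : nat) (e : 'rV[R]_n -> 'rV[R]_n)
  (f : 'rV[R]_n -> 'rV[R]_m -> 'rV[R]_n) (alpha eps : R).
Hypotheses (de : forall x, differentiable e x)
  (dfx : forall x u, differentiable (fun y => f y u) x)
  (dfu : forall x u, differentiable (fun v => f x v) u)
  (eps0 : 0 < eps)
  (Q : forall x (v : 'rV[R]_n),
      eps * \sum_i v 0 i ^+ 2 <= \sum_i v 0 i * \sum_j v 0 j * Emat e x i j)
  (Fpos : forall x u i j, 0 <= Fmat f x u i j)
  (Kpos : forall x u i j, 0 <= Kmat f x u i j)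
  (Eoff : forall x i j, i != j -> Emat e x i j <= 0)
  (col : forall x u j, \sum_i Fmat f x u i j <= alpha * \sum_i Emat e x i j)
  (alpha0 : 0 <= alpha).

Lemma sum_pick k (i : 'I_k) (F : 'I_k -> R) (a : R) :
  \sum_l (a *: (delta_mx 0 i : 'rV[R]_k)) 0 l * F l = a * F i.
Proof.
rewrite (bigD1 i) //= big1 ?addr0; first by rewrite !mxE !eqxx mulr1.
by move=> l /negbTE li; rewrite !mxE li andbF mulr0 mul0r.
Qed.

Lemma sum_const0 k (F : 'I_k -> R) : \sum_l (0 : 'rV[R]_k) 0 l * F l = 0.
Proof. by rewrite big1 // => l _; rewrite mxE mul0r. Qed.

Lemma SM (a b : 'rV[R]_n) : eps * \sum_i (a - b) 0 i ^+ 2 <= \sum_i (a - b) 0 i * (e a 0 i - e b 0 i).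
Proof.
set d := a - b.
have P : forall s : R, 0 < s < 1 -> 0 <= \sum_i d 0 i * (\sum_j d 0 j * Jac e (b + s *: d) i j)
   + \sum_i (0:'rV[R]_n) 0 i * (\sum_j d 0 j * Jac e (b + s *: d) i j)
   + - (eps * \sum_i d 0 i ^+ 2).
  move=> s _; rewrite sum_const0 addr0 subr_ge0; exact: Q.
have := @seg_gen R n n n e e d 0 _ b d de de P.
rewrite !sum_const0 !addr0.
have -> : b + d = a by rewrite /d addrC subrK.
have -> : \sum_i d 0 i * (e a 0 i - e b 0 i) = \sum_i d 0 i * e a 0 i - \sum_i d 0 i * e b 0 i.
  by rewrite -sumrB; apply: eq_bigr => i _; rewrite mulrBr.
move=> H; lra.
Qed.

Lemma sumsq0 k (v : 'rV[R]_k) : eps * \sum_i v 0 i ^+ 2 <= 0 -> forall i, v 0 i = 0.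
Proof.
rewrite pmulr_rle0 // => HS.
have S0 : \sum_i v 0 i ^+ 2 = 0.
  by apply/eqP; rewrite eq_le HS sumr_ge0 // => i _; exact: sqr_ge0.
move=> i; have := (psumr_eq0P (fun i _ => sqr_ge0 (v 0 i)) S0) i isT.
by move/eqP; rewrite sqrf_eq0 => /eqP.
Qed.

Lemma inj (a b : 'rV[R]_n) : e a = e b -> a = b.
Proof.
move=> Hab; have := SM a b; rewrite Hab [X in _ <= X]big1 => [|i _]; last by rewrite subrr mulr0.
move/sumsq0 => H; apply/rowP => i.
by apply/eqP; rewrite -subr_eq0; have := H i; rewrite !mxE => ->.
Qed.

Lemma anti (i : 'I_n) (w z : 'rV[R]_n) : mx_le z w -> w 0 i = z 0 i -> e w 0 i <= e z 0 i.
Proof.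
move=> hzw hi; set d := w - z.
have P : forall s : R, 0 < s < 1 ->
   0 <= \sum_l ((-1) *: (delta_mx 0 i : 'rV[R]_n)) 0 l * (\sum_j d 0 j * Jac e (z + s *: d) l j)
   + \sum_l (0:'rV[R]_n) 0 l * (\sum_j d 0 j * Jac e (z + s *: d) l j) + 0.
  move=> s _; rewrite sum_pick sum_const0 !addr0 mulN1r oppr_ge0.
  apply: sumr_le0 => j _.
  have [->|ij] := eqVneq j i; first by rewrite /d !mxE hi subrr mul0r.
  apply: mulr_ge0_le0; first by rewrite /d !mxE subr_ge0 hzw.
  by apply: Eoff; rewrite eq_sym.
have := @seg_gen R n n n e e _ 0 0 z d de de P.
rewrite !sum_pick !sum_const0 !addr0.
have -> : z + d = w by rewrite /d addrC subrK.
lra.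
Qed.

Lemma fmono (x x' : 'rV[R]_n) (u u' : 'rV[R]_m) :
  mx_le x' x -> mx_le u' u -> mx_le (f x' u') (f x u).
Proof.
move=> hx hu i0 i; have -> : i0 = 0 by apply: ord1.
apply: (@le_trans _ _ (f x u' 0 i)).
  set d := x - x'.
  have P : forall s : R, 0 < s < 1 ->
     0 <= \sum_l (1 *: (delta_mx 0 i : 'rV[R]_n)) 0 l * (\sum_j d 0 j * Jac (fun y => f y u') (x' + s *: d) l j)
     + \sum_l (0:'rV[R]_n) 0 l * (\sum_j d 0 j * Jac (fun y => f y u') (x' + s *: d) l j) + 0.
    move=> s _; rewrite sum_pick sum_const0 !addr0 mul1r.
    apply: sumr_ge0 => j _; apply: mulr_ge0; first by rewrite /d !mxE subr_ge0 hx.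
    exact: (Fpos (x' + s *: d) u' i j).
  have := @seg_gen R n n n _ _ _ 0 0 x' d (fun z => dfx z u') (fun z => dfx z u') P.
  rewrite !sum_pick !sum_const0 !addr0.
  have -> : x' + d = x by rewrite /d addrC subrK.
  lra.
set d := u - u'.
have P : forall s : R, 0 < s < 1 ->
   0 <= \sum_l (1 *: (delta_mx 0 i : 'rV[R]_n)) 0 l * (\sum_j d 0 j * Jac (fun v => f x v) (u' + s *: d) l j)
   + \sum_l (0:'rV[R]_n) 0 l * (\sum_j d 0 j * Jac (fun v => f x v) (u' + s *: d) l j) + 0.
  move=> s _; rewrite sum_pick sum_const0 !addr0 mul1r.
  apply: sumr_ge0 => j _; apply: mulr_ge0; first by rewrite /d !mxE subr_ge0 hu.
  exact: (Kpos x (u' + s *: d) i j).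
have := @seg_gen R m n n _ _ _ 0 0 u' d (fun z => dfu x z) (fun z => dfu x z) P.
rewrite !sum_pick !sum_const0 !addr0.
have -> : u' + d = u by rewrite /d addrC subrK.
lra.
Qed.

Lemma inv_iso (y z : 'rV[R]_n) : mx_le (e z) (e y) -> mx_le z y.
Proof.
move=> hyz.
pose p : 'rV[R]_n := \row_l Num.max (z 0 l - y 0 l) 0.
pose w := y + p.
have := SM w y; have -> : w - y = p by rewrite /w addrAC subrr add0r.
have T : \sum_i p 0 i * (e w 0 i - e y 0 i) <= 0.
  apply: sumr_le0 => i _.
  have [zy|yz] := lerP (z 0 i - y 0 i) 0.
    by rewrite /p mxE max_r // mul0r.
  have pi : p 0 i = z 0 i - y 0 i by rewrite /p mxE max_l // ltW.
  apply: mulr_ge0_le0; first by rewrite pi ltW.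
  have a1 : mx_le z w.
    move=> i0 j; have -> : i0 = 0 by apply: ord1.
    by rewrite /w /p !mxE -lerBlDl le_max lexx.
  have a2 : w 0 i = z 0 i by rewrite /w /p !mxE max_l ?ltW // addrC subrK.
  by rewrite subr_le0; apply: le_trans (anti a1 a2) (hyz 0 i).
move=> H; have {}H := sumsq0 (le_trans H T).
move=> i0 i; have -> : i0 = 0 by apply: ord1.
have h := H i; rewrite /p mxE in h.
by rewrite -subr_le0 -h le_max lexx.
Qed.

Lemma sum_constc0 k (c : R) (F : 'I_k -> R) :
  \sum_l (c *: (const_mx 1 : 'rV[R]_k)) 0 l * F l = c * \sum_l F l.
Proof. by rewrite mulr_sumr; apply: eq_bigr => l _; rewrite !mxE mulr1. Qed.

Lemma seg_c k1 k2 (g1 : 'rV[R]_n -> 'rV[R]_k1) (g2 : 'rV[R]_n -> 'rV[R]_k2)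
  (c1 c2 K : R) (b d : 'rV[R]_n) :
  (forall x, differentiable g1 x) -> (forall x, differentiable g2 x) ->
  (forall s, 0 < s < 1 ->
     0 <= c1 * \sum_i (\sum_j d 0 j * Jac g1 (b + s *: d) i j)
        + c2 * \sum_i (\sum_j d 0 j * Jac g2 (b + s *: d) i j) + K) ->
  c1 * \sum_i g1 b 0 i + c2 * \sum_i g2 b 0 i <=
  c1 * \sum_i g1 (b + d) 0 i + c2 * \sum_i g2 (b + d) 0 i + K.
Proof.
move=> d1 d2 P.
have P' : forall s : R, 0 < s < 1 ->
  0 <= \sum_i (c1 *: (const_mx 1 : 'rV[R]_k1)) 0 i * (\sum_j d 0 j * Jac g1 (b + s *: d) i j)
        + \sum_i (c2 *: (const_mx 1 : 'rV[R]_k2)) 0 i * (\sum_j d 0 j * Jac g2 (b + s *: d) i j) + K.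
  by move=> s hs; rewrite !sum_constc0; exact: P.
by have := @seg_gen R n k1 k2 g1 g2 _ _ K b d d1 d2 P'; rewrite !sum_constc0.
Qed.

Lemma seg_pick k1 (g1 : 'rV[R]_n -> 'rV[R]_k1) (i : 'I_k1) (c : R) (b d : 'rV[R]_n) :
  (forall x, differentiable g1 x) ->
  (forall s, 0 < s < 1 -> 0 <= c * (\sum_j d 0 j * Jac g1 (b + s *: d) i j)) ->
  c * g1 b 0 i <= c * g1 (b + d) 0 i.
Proof.
move=> d1 P.
have P' : forall s : R, 0 < s < 1 ->
  0 <= \sum_l (c *: (delta_mx 0 i : 'rV[R]_k1)) 0 l * (\sum_j d 0 j * Jac g1 (b + s *: d) l j)
        + \sum_l (0 : 'rV[R]_k1) 0 l * (\sum_j d 0 j * Jac g1 (b + s *: d) l j) + 0.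
  by move=> s hs; rewrite sum_pick sum_const0 !addr0; exact: P.
by have := @seg_gen R n k1 k1 g1 g1 _ _ 0 b d d1 d1 P'; rewrite !sum_pick !sum_const0 !addr0.
Qed.

Lemma arith3 (x y A : R) : 0 <= x * y -> 0 <= A -> 0 <= x * (y * A).
Proof. by move=> h1 h2; rewrite mulrA mulr_ge0. Qed.

Lemma arith4 (x y A : R) : 0 <= x * y -> A <= 0 -> 0 <= - x * (y * A).
Proof.
move=> h1 h2; have -> : - x * (y * A) = x * y * (- A) by ring.
by rewrite mulr_ge0 // oppr_ge0.
Qed.

Lemma arith5 (x E N : R) : 0 < x -> E * x ^+ 2 <= x * N -> x * E <= N.
Proof.
move=> hx h; rewrite -(ler_pM2l hx).
by have -> : x * (x * E) = E * x ^+ 2 by ring.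
Qed.

Lemma arith1 (x y A B a : R) : 0 <= x * y * (a * B - A) ->
  0 <= - x * (y * A) + a * x * (y * B) + 0.
Proof. move=> h; apply: (le_trans h); rewrite le_eqVlt; apply/orP; left; apply/eqP; ring. Qed.

Lemma arith2 (x a F1 F0 E1 E0 : R) : - x * F0 + a * x * E0 <= - x * F1 + a * x * E1 + 0 ->
  x * (F1 - F0) <= a * (x * (E1 - E0)).
Proof.
move=> h; rewrite -subr_ge0.
have -> : a * (x * (E1 - E0)) - x * (F1 - F0) = - x * F1 + a * x * E1 + 0 - (- x * F0 + a * x * E0) by ring.
by rewrite subr_ge0.
Qed.

Section Leg.
Variables (p q : 'rV[R]_n) (k : 'I_n) (dl : R) (u : 'rV[R]_m).
Hypothesis hj : forall j, (q - p) 0 j = if j == k then dl else 0.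
Let sgn : R := if 0 <= dl then 1 else -1.

Lemma leg_jsum (M : 'M[R]_n) i : \sum_j (q - p) 0 j * M i j = dl * M i k.
Proof.
rewrite (bigD1 k) //= hj eqxx big1 ?addr0 // => j /negbTE jk.
by rewrite hj jk mul0r.
Qed.

Lemma leg_jsum2 (M : 'M[R]_n) : \sum_i \sum_j (q - p) 0 j * M i j = dl * \sum_i M i k.
Proof. by rewrite mulr_sumr; apply: eq_bigr => i _; exact: leg_jsum. Qed.

Lemma sgn_abs : sgn * dl = `|dl|.
Proof.
rewrite /sgn; case: ifP => h; first by rewrite mul1r ger0_norm.
by rewrite mulN1r ler0_norm // ltW // ltNge h.
Qed.

Lemma hpq : p + (q - p) = q.
Proof. by rewrite addrC subrK. Qed.

Lemma leg1 : sgn * \sum_i (f q u - f p u) 0 i <= alpha * (sgn * \sum_i (e q - e p) 0 i).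
Proof.
have P : forall s : R, 0 < s < 1 ->
   0 <= (- sgn) * \sum_i (\sum_j (q - p) 0 j * Jac (fun y => f y u) (p + s *: (q - p)) i j)
   + (alpha * sgn) * \sum_i (\sum_j (q - p) 0 j * Jac e (p + s *: (q - p)) i j) + 0.
  move=> s _.
  rewrite [X in _ * X + _ + _](leg_jsum2 (Jac (fun y => f y u) (p + s *: (q - p)))).
  rewrite [X in _ + _ * X + _](leg_jsum2 (Jac e (p + s *: (q - p)))).
  have h : 0 <= alpha * \sum_i Jac e (p + s *: (q - p)) i k - \sum_i Jac (fun y => f y u) (p + s *: (q - p)) i k.
    by rewrite subr_ge0; exact: (col _ u k).
  have hs : 0 <= sgn * dl by rewrite sgn_abs.
  exact: (arith1 (mulr_ge0 hs h)).
have := @seg_c n n (fun y => f y u) e _ _ 0 p (q - p) (fun z => dfx z u) de P.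
rewrite hpq.
have -> : \sum_i (f q u - f p u) 0 i = \sum_i f q u 0 i - \sum_i f p u 0 i.
  by rewrite -sumrB; apply: eq_bigr => i _; rewrite !mxE.
have -> : \sum_i (e q - e p) 0 i = \sum_i e q 0 i - \sum_i e p 0 i.
  by rewrite -sumrB; apply: eq_bigr => i _; rewrite !mxE.
exact: arith2.
Qed.

Lemma leg2 i : 0 <= sgn * (f q u - f p u) 0 i.
Proof.
have P : forall s : R, 0 < s < 1 ->
   0 <= sgn * (\sum_j (q - p) 0 j * Jac (fun y => f y u) (p + s *: (q - p)) i j).
  move=> s _.
  rewrite [X in _ * X](leg_jsum (Jac (fun y => f y u) (p + s *: (q - p)))).
  apply: arith3; first by rewrite sgn_abs.
  exact: (Fpos _ u i k).
have := @seg_pick n (fun y => f y u) i sgn p (q - p) (fun z => dfx z u) P.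
rewrite hpq !mxE => h; rewrite mulrBr subr_ge0; exact: h.
Qed.

Lemma leg3 i : i != k -> sgn * (e q - e p) 0 i <= 0.
Proof.
move=> ik.
have P : forall s : R, 0 < s < 1 ->
   0 <= - sgn * (\sum_j (q - p) 0 j * Jac e (p + s *: (q - p)) i j).
  move=> s _.
  rewrite [X in _ * X](leg_jsum (Jac e (p + s *: (q - p)))).
  apply: arith4; first by rewrite sgn_abs.
  exact: (Eoff _ ik).
have := @seg_pick n e i (- sgn) p (q - p) de P.
rewrite hpq !mxE !mulNr lerN2 => h; rewrite mulrBr subr_le0; exact: h.
Qed.

End Leg.

Section Stair.
Variables (a b : 'rV[R]_n) (u : 'rV[R]_m).

Definition stair (k : nat) : 'rV[R]_n := \row_l (if (l < k)%N then a 0 l else b 0 l).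

Lemma stair0 : stair 0 = b.
Proof. by apply/rowP => l; rewrite !mxE. Qed.

Lemma stairn : stair n = a.
Proof. by apply/rowP => l; rewrite !mxE ltn_ord. Qed.

Lemma stair_step (k : 'I_n) j :
  (stair k.+1 - stair k) 0 j = (if j == k then a 0 k - b 0 k else 0).
Proof.
rewrite !mxE ltnS; have -> : (j == k) = (nat_of_ord j == k) by []. case: (ltngtP j k) => [jk|kj|jk].
- by rewrite subrr.
- by rewrite subrr.
- by have -> : j = k by apply: ord_inj.
Qed.


Lemma tele (F : 'rV[R]_n -> 'rV[R]_n) i :
  (F a - F b) 0 i = \sum_(k < n) (F (stair k.+1) - F (stair k)) 0 i.
Proof.
rewrite -summxE; congr (fun_of_matrix _ 0 i).
rewrite -(big_mkord xpredT (fun k => F (stair k.+1) - F (stair k))).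
by rewrite telescope_sumr // stairn stair0.
Qed.

Definition sgk (k : 'I_n) : R := if 0 <= a 0 k - b 0 k then 1 else -1.

Lemma contr_step : \sum_i `|(f a u - f b u) 0 i| <= alpha * \sum_i `|(e a - e b) 0 i|.
Proof.
under eq_bigr do rewrite (tele (fun y => f y u)).
under [X in _ <= _ * X]eq_bigr do rewrite (tele e).
apply: (@chain R n alpha sgk (fun k i => (f (stair k.+1) u - f (stair k) u) 0 i)
   (fun k i => (e (stair k.+1) - e (stair k)) 0 i)) => //.
- by move=> k; rewrite /sgk; case: ifP; [left|right].

- move=> k i; exact: (leg2 u (stair_step k) i).
- move=> k i ik; exact: (leg3 (stair_step k) ik).
- move=> k; rewrite -!mulr_sumr; exact: (leg1 u (stair_step k)).
Qed.

End Stair.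

Lemma supbound (a b : 'rV[R]_n) :
  lp_norm (+oo)%E (a - b) <= (\sum_i `|(e a - e b) 0 i|) / eps.
Proof.
rewrite /lp_norm.
have N0 : 0 <= \sum_i `|(e a - e b) 0 i| by apply: sumr_ge0 => i _.
apply: bigmax_le => [|i _]; first by rewrite divr_ge0 // ltW.
have [k _ hk] := @eq_bigmax _ _ _ 0 i xpredT (fun j => `|(a - b) 0 j|) isT (fun j _ => normr_ge0 _).
have hj : forall j, `|(a - b) 0 j| <= `|(a - b) 0 k|.
  by move=> j; rewrite -hk; exact: le_bigmax.
apply: (le_trans (hj i)).
have H1 := SM a b.
have H2 : \sum_i (a - b) 0 i * (e a 0 i - e b 0 i) <= `|(a - b) 0 k| * \sum_i `|(e a - e b) 0 i|.
  rewrite mulr_sumr; apply: ler_sum => j _.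
  have -> : (e a - e b) 0 j = e a 0 j - e b 0 j by rewrite !mxE.
  apply: (le_trans (ler_norm _)); rewrite normrM.
  by apply: ler_wpM2r => //; exact: hj.
have H3 : eps * `|(a - b) 0 k| ^+ 2 <= eps * \sum_i (a - b) 0 i ^+ 2.
  rewrite ler_pM2l // (bigD1 k) //= -[X in X <= _]addr0 real_normK ?num_real //.
  by apply: lerD => //; apply: sumr_ge0 => j _; exact: sqr_ge0.
have H4 := le_trans H3 (le_trans H1 H2).
have [->|kpos] := eqVneq `|(a - b) 0 k| 0; first by rewrite divr_ge0 // ltW.
have kp : 0 < `|(a - b) 0 k| by rewrite lt_def kpos normr_ge0.
rewrite ler_pdivlMr //.
exact: arith5.
Qed.

Definition Psi (c y : 'rV[R]_n) : R := \sum_i (e y 0 i - c 0 i) ^+ 2.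

Lemma Psi_cont (c : 'rV[R]_n) : continuous (Psi c).
Proof.
move=> y; apply: cont_sum => i; apply: cont_sq; apply: cont_coord.
exact: differentiable_continuous.
Qed.

Lemma arith6 (E y w v C : R) : 0 < E ->
  E * (y * ((w + C) - (v + C))) <= E ^+ 2 / 2 * y ^+ 2 + w ^+ 2 + v ^+ 2.
Proof.
move=> hE; rewrite -subr_ge0.
have -> : E ^+ 2 / 2 * y ^+ 2 + w ^+ 2 + v ^+ 2 - E * (y * ((w + C) - (v + C)))
   = (E * y / 2 - w) ^+ 2 + (E * y / 2 + v) ^+ 2 by field.
by rewrite addr_ge0 // sqr_ge0.
Qed.

Lemma Psi_coer (c y : 'rV[R]_n) : eps ^+ 2 / 2 * \sum_i y 0 i ^+ 2 <= Psi c y + Psi c 0.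
Proof.
have H1 := SM y 0.
rewrite subr0 in H1.
have H2 : eps * \sum_i y 0 i * (e y 0 i - e 0 0 i) <=
     eps ^+ 2 / 2 * \sum_i y 0 i ^+ 2 + Psi c y + Psi c 0.
  rewrite /Psi mulr_sumr mulr_sumr -!big_split /=; apply: ler_sum => i _.
  have := arith6 (y 0 i) (e y 0 i - c 0 i) (e 0 0 i - c 0 i) (c 0 i) eps0.
  by rewrite !subrK.
have H3 : eps * (eps * \sum_i y 0 i ^+ 2) <= eps * \sum_i y 0 i * (e y 0 i - e 0 0 i).
  by rewrite ler_pM2l.
have H4 := le_trans H3 H2.
move: H4; set S := \sum_i y 0 i ^+ 2; set P1 := Psi c y; set P0 := Psi c 0.
move=> H4.
have -> : eps ^+ 2 / 2 * S = eps * (eps * S) - eps ^+ 2 / 2 * S by field.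
lra.
Qed.

Lemma exist_min (c : 'rV[R]_n) : exists y, forall z, Psi c y <= Psi c z.
Proof.
pose A : set 'rV[R]_n := fun y => Psi c y <= Psi c 0.
have Acl : closed A.
  by apply: (@preimage_closed _ _ (Psi c) (fun x : R => x <= Psi c 0)) => [y _|]; [exact: Psi_cont|exact: closed_le].
pose B := 4 * Psi c 0 / eps ^+ 2.
have P00 : 0 <= Psi c 0 by apply: sumr_ge0 => j _; exact: sqr_ge0.
have B0 : 0 <= B by apply: divr_ge0; [apply: mulr_ge0 | apply: exprn_ge0; exact: ltW].
have Abd : forall y, A y -> forall i, `|y 0 i| <= 1 + B.
  move=> y Ay i.
  have P0 : 0 <= Psi c 0 by apply: sumr_ge0 => j _; exact: sqr_ge0.
  have hS : `|y 0 i| ^+ 2 <= B.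
    have := Psi_coer c y; rewrite /A /= in Ay.
    have e2 : 0 < eps ^+ 2 by rewrite exprn_gt0.
    have hi : y 0 i ^+ 2 <= \sum_j y 0 j ^+ 2.
      rewrite (bigD1 i) //= -[X in X <= _]addr0 lerD2l.
      by apply: sumr_ge0 => j _; exact: sqr_ge0.
    rewrite real_normK ?num_real // /B => h.
    rewrite ler_pdivlMr //.
    have : eps ^+ 2 / 2 * y 0 i ^+ 2 <= 2 * Psi c 0.
      apply: le_trans (le_trans _ h) _; first by rewrite ler_pM2l ?divr_gt0.
      lra.
    move=> h2.
    have -> : 4 * Psi c 0 = 2 * (2 * Psi c 0) by ring.
    have -> : y 0 i ^+ 2 * eps ^+ 2 = 2 * (eps ^+ 2 / 2 * y 0 i ^+ 2) by field.
    by rewrite ler_pM2l.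
  have [h1|h1] := lerP `|y 0 i| 1.
    lra.
  have : `|y 0 i| <= `|y 0 i| ^+ 2.
    by rewrite expr2 ler_peMr // ltW.
  lra.
have Abd' : bounded_set A.
  exists (1 + B); split; first by rewrite num_real.
  move=> M hM y Ay /=.
  rewrite [leLHS]/Num.Def.normr /= mx_normrE; apply: bigmax_le => [|[i0 j] _].
    apply: le_trans (ltW hM); lra.
  have -> : i0 = 0 by apply: ord1.
  exact: le_trans (Abd _ Ay j) (ltW hM).
have Acp : compact A := bounded_closed_compact Abd' Acl.
have A0 : (A !=set0)%classic by exists 0; rewrite /A /=.
have [y yA ymin] := EVT_min_rV A0 Acp (continuous_subspaceT (@Psi_cont c)).
exists y => z.
have [zA|zA] := boolP (z \in A); first exact: ymin.
have h1 : Psi c 0 < Psi c z.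
  rewrite ltNge; apply/negP => h; move/negP: zA; apply; exact: mem_set.
have h2 : Psi c y <= Psi c 0 := set_mem yA.
exact: le_trans h2 (ltW h1).
Qed.

Lemma surj (c : 'rV[R]_n) : exists y, e y = c.
Proof.
have [y ymin] := exist_min c.
exists y.
pose d := c - e y.
pose phi := fun t : R => Psi c (y + t *: d).
have Dphi : forall t : R, is_derive t (1:R) phi
   (\sum_i 2 * (e (y + t *: d) 0 i - c 0 i) * (d *m jacobian e (y + t *: d)) 0 i).
  move=> t.
  have h : forall i, is_derive t (1:R) (fun s : R => (e (y + s *: d) 0 i - c 0 i) ^+ 2)
      (2 * (e (y + t *: d) 0 i - c 0 i) * (d *m jacobian e (y + t *: d)) 0 i).
    move=> i; apply: is_derive_sq.
    exact: (is_derive_coord i (is_derive_line (de (y + t *: d)))).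
  have hs := is_derive_sum h.
  eapply is_derive_ext; first exact: hs.
    by apply/funext => x; rewrite fct_sumE.
  by [].
have D0 : is_derive (0:R) (1:R) phi 0.
  apply: (@derive1_at_min R phi (-1) 1 0).
  - lra.
  - by move=> t _; have [] := Dphi t.
  - by rewrite in_itv /=; apply/andP; split; lra.
  - by move=> t _; rewrite /phi scale0r addr0; exact: ymin.
have E1 := @derive_val _ _ _ _ _ _ _ (Dphi 0).
have E0 := @derive_val _ _ _ _ _ _ _ D0.
rewrite E0 scale0r addr0 in E1.
pose r := e y - c.
have dr : forall j, d 0 j = - r 0 j by move=> j; rewrite !mxE opprB.
have E2 : \sum_i 2 * (e y 0 i - c 0 i) * (d *m jacobian e y) 0 i
     = - 2 * \sum_i r 0 i * \sum_j r 0 j * Jac e y i j.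
  rewrite mulr_sumr; apply: eq_bigr => i _; rewrite jac_entry.
  have -> : \sum_j d 0 j * Jac e y i j = - \sum_j r 0 j * Jac e y i j.
    by rewrite -sumrN; apply: eq_bigr => k _; rewrite dr mulNr.
  have -> : e y 0 i - c 0 i = r 0 i by rewrite !mxE.
  ring.
rewrite E2 in E1.
have E3 : \sum_i r 0 i * \sum_j r 0 j * Jac e y i j = 0.
  by move/eqP: E1; rewrite eq_sym mulf_eq0 oppr_eq0 pnatr_eq0 /= => /eqP.
have := Q y r; rewrite /Emat E3 => /sumsq0 H.
apply/rowP => i; have := H i; rewrite !mxE => /eqP; rewrite subr_eq0 => /eqP.
by [].
Qed.

Lemma wp : well_posed_sys e f.
Proof.
move=> x u; have [y hy] := surj (f x u).
by exists y; split => // y' hy'; apply: inj; rewrite hy hy'.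
Qed.

Lemma mono : monotone_sys e f.
Proof.
move=> ua ub xa xb ha hb h0 hu; elim=> [//|t IH].
apply: inv_iso; rewrite ha hb; exact: fmono.
Qed.

Lemma traj_bound (u : nat -> 'rV[R]_m) xa xb : is_traj e f u xa -> is_traj e f u xb ->
  forall t, \sum_i `|(e (xa t) - e (xb t)) 0 i| <=
            alpha ^+ t * \sum_i `|(e (xa 0%N) - e (xb 0%N)) 0 i|.
Proof.
move=> ha hb; elim=> [|t IH]; first by rewrite expr0 mul1r.
rewrite ha hb; apply: le_trans (contr_step _ _ _) _.
by rewrite exprS -mulrA ler_wpM2l.
Qed.

Lemma cont_b : continuous (fun z : 'rV[R]_n * 'rV[R]_n =>
   (\sum_i `|(e z.1 - e z.2) 0 i|) / eps + 1).
Proof.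
move=> z.
pose X := fun z : 'rV[R]_n * 'rV[R]_n => \sum_i `|(e z.1 - e z.2) 0 i|.
have -> : (fun z : 'rV[R]_n * 'rV[R]_n => (\sum_i `|(e z.1 - e z.2) 0 i|) / eps + 1)
   = (X \* cst eps^-1) + cst 1 by apply/funext.
apply: continuousD; last exact: cst_continuous.
apply: continuousM; last exact: cst_continuous.
apply: cont_sum => i; apply: cont_abs; apply: cont_coord.
apply: continuousB.
- apply: (@continuous_comp _ _ _ fst e); first exact: cvg_fst.
  exact: differentiable_continuous.
- apply: (@continuous_comp _ _ _ snd e); first exact: cvg_snd.
  exact: differentiable_continuous.
Qed.

Hypothesis alpha_pos : 0 < alpha.

Lemma contr : contracting_sys e f alpha.
Proof.
split; first exact: wp.
exists (+oo)%E; split; first exact: leey.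
exists (fun xa xb => (\sum_i `|(e xa - e xb) 0 i|) / eps + 1).
split; first exact: cont_b.
split.
  move=> xa xb; apply: ltr_wpDl => //; apply: divr_ge0; last exact: ltW.
  by apply: sumr_ge0 => i _.
move=> u xa xb ha hb t.
apply: le_lt_trans (supbound _ _) _.
have at0 : 0 < alpha ^+ t by rewrite exprn_gt0.
rewrite mulrDr mulr1 mulrA ltr_pwDr //.
rewrite ler_pM2r ?invr_gt0 //.
exact: traj_bound.
Qed.

Lemma pos : e 0 = f 0 0 -> positive_sys e f.
Proof.
move=> h0 u x hx hx0 hu t.
exact: (@mono u (fun _ => 0) x (fun _ => 0) hx (fun _ => h0) hx0 hu t).
Qed.

Lemma all_props : (well_posed_sys e f /\ monotone_sys e f /\ contracting_sys e f alpha) /\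
  (e 0 = f 0 0 -> positive_sys e f).
Proof. split; [split; [exact: wp | split; [exact: mono | exact: contr]] | exact: pos]. Qed.

End Main.

Lemma quad (R : realType) n (v : 'rV[R]_n) (E : 'M[R]_n) (c : R) :
  (v *m (E + E^T - c%:M) *m v^T) 0 0 =
  2 * \sum_i v 0 i * \sum_j v 0 j * E i j - c * \sum_i v 0 i ^+ 2.
Proof.
rewrite mxE.
have -> : \sum_k (v *m (E + E^T - c%:M)) 0 k * v^T k 0 =
   \sum_k \sum_i (v 0 i * E i k * v 0 k + v 0 i * E k i * v 0 k - v 0 i * (c *+ (i == k)) * v 0 k).
  apply: eq_bigr => k _; rewrite !mxE mulr_suml; apply: eq_bigr => i _.
  by rewrite !mxE; ring.
rewrite (eq_bigr (fun k => \sum_i (v 0 i * E i k * v 0 k + v 0 i * E k i * v 0 k) - c * v 0 k ^+ 2)); last first.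
  move=> k _; rewrite sumrB; congr (_ - _).
  rewrite (bigD1 k) //= big1 ?addr0; first by rewrite eqxx mulr1n; ring.
  by move=> i /negbTE ->; rewrite mulr0n mulr0 mul0r.
rewrite sumrB -mulr_sumr; congr (_ - _).
under eq_bigr do rewrite big_split /=.
rewrite big_split /= mulr2n mulrDl mul1r; congr (_ + _).
  rewrite exchange_big /=; apply: eq_bigr => i _; rewrite mulr_sumr.
  by apply: eq_bigr => j _; ring.
apply: eq_bigr => i _; rewrite mulr_sumr; apply: eq_bigr => j _; ring.
Qed.

Unset Implicit Arguments.
Set Strict Implicit.

Theorem theorem1 (R : realType) (n m : nat)
  (e : 'rV[R]_n -> 'rV[R]_n) (f : 'rV[R]_n -> 'rV[R]_m -> 'rV[R]_n)
  (alpha : R) :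
  C1map e -> C1map (uncurry_f f) ->
  0 < alpha < 1 ->
  (exists eps : R, 0 < eps /\
     forall x, posdef_mx (Emat e x + (Emat e x)^T - eps%:M)) ->
  (forall x u, mx_le 0 (Fmat f x u)) ->
  (forall x u, mx_le 0 (Kmat f x u)) ->
  (forall x, is_Mmatrix (Emat e x)) ->
  (forall x u, mx_le 0 (const_mx 1 *m (alpha *: Emat e x - Fmat f x u)
                       : 'rV[R]_n)) ->
  (well_posed_sys e f /\ monotone_sys e f /\ contracting_sys e f alpha) /\
  (e 0 = f 0 0 -> positive_sys e f).
Proof.
move=> [de _] [duf _] /andP[a0 a1] [eps0 [heps hpd]] hF hK hM hcol.
apply: (@all_props R n m e f alpha (eps0 / 2)).
- exact: de.
- exact: diff_f1.
- exact: diff_f2.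
- by rewrite divr_gt0.
- move=> x v.
  have [->|v0] := eqVneq v 0.
    by rewrite !big1 ?mulr0 // => i _; rewrite mxE ?mul0r // expr2 mul0r.
  have := hpd x v v0; rewrite quad => h.
  rewrite -subr_ge0; apply: ltW.
  move: h; set X := \sum_i _; set S := \sum_i _.
  by move=> h; lra.
- by move=> x u i j; have := hF x u i j; rewrite mxE.
- by move=> x u i j; have := hK x u i j; rewrite mxE.
- by move=> x i j ij; exact: (hM x).1.
- move=> x u j; have := hcol x u 0 j; rewrite !mxE -subr_ge0 => h.
  rewrite -subr_ge0 mulr_sumr -sumrB.
  move: h; congr (0 <= _); rewrite subr0; apply: eq_bigr => k _.
  by move: (Emat e x) (Fmat f x u) => A B; rewrite !mxE mul1r.
- exact: ltW.
- exact: a0.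
Qed.
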